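(* Define $Q(0)=0$, $Q(1)=1$, $Q(n)=b(n)Q(n-1)+Q(n-2)$ for $n\ge2$, where $b(n)=2n/3$ if $3\mid n$ and $b(n)=1$ if $3\nmid n$. For every integer $M>0$, the sequence $(Q(n)\bmod M)_{n\ge0}$ is periodic, with period at most $3M^3$.
   Context: $Q(n)$ is the denominator of the $n$th convergent of the simple continued fraction of $e$. *)

(* Defs.v *)
From mathcomp Require Import all_boot.
Set Implicit Arguments. Unset Strict Implicit. Unset Printing Implicit Defensive.

Definition b (n : nat) : nat := if 3 %| n then (2 * n) %/ 3 else 1.

(* QQ n = (Q n, Q (n+1)) *)
Fixpoint QQ (n : nat) : nat * nat :=
  match n with
  | 0 => (0, 1)
  | m.+1 => let: (q0, q1) := QQ m in (q1, b m.+2 * q1 + q0)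
  end.

Definition Q (n : nat) : nat := (QQ n).1.

Lemma Q0 : Q 0 = 0. Proof. by []. Qed.
Lemma Q1 : Q 1 = 1. Proof. by []. Qed.
Lemma QS n : Q n.+2 = b n.+2 * Q n.+1 + Q n.
Proof. by rewrite /Q /=; case: (QQ n). Qed.

(* Main.v *)
Require Import Defs.
From mathcomp Require Import all_boot.

Lemma bcong M n m : 0 < M -> n %% (3*M) = m %% (3*M) -> b n %% M = b m %% M.
Proof.
move=> M0 H.
have H3 : n %% 3 = m %% 3.
  by rewrite -(modn_dvdm n (dvdn_mulr M (dvdnn 3))) H modn_dvdm // dvdn_mulr.
rewrite /b /dvdn H3; case: ifP => // /eqP hm.
have /eqP hn : n %% 3 == 0 by rewrite H3 hm.
move: hn hm H => /eqP hn /eqP hm.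
rewrite -(divnK hn) -(divnK hm).
set k := n %/ 3; set l := m %/ 3.
rewrite !mulnA !mulnK // ![_ * 3]mulnC => H.
rewrite -!muln_modr in H.
have {}H : k %% M = l %% M by apply/eqP; rewrite -(eqn_pmul2l (isT : 0 < 3)) H.
by rewrite -modnMmr H modnMmr.
Qed.

Definition eqst M a c := [/\ a %% (3*M) = c %% (3*M), Q a %% M = Q c %% M & Q a.+1 %% M = Q c.+1 %% M].

Lemma succ_cong d a c : a %% d = c %% d -> a.+2 %% d = c.+2 %% d.
Proof. by move=> H; rewrite -(addn2 a) -(addn2 c) -modnDml H modnDml. Qed.

Lemma fwd M a c : 0 < M -> eqst M a c -> eqst M a.+1 c.+1.
Proof.
move=> M0 [h1 h2 h3]; split => //.
  by rewrite -(addn1 a) -(addn1 c) -modnDml h1 modnDml.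
have hb := bcong _ _ _ M0 (succ_cong _ _ _ h1).
by rewrite !QS -modnDm -modnMm hb h3 h2 modnMm modnDm.
Qed.

Lemma back M a c : 0 < M -> eqst M a.+1 c.+1 -> eqst M a c.
Proof.
move=> M0 [h1 h2 h3].
have h1' : a %% (3*M) = c %% (3*M).
  by apply/eqP; rewrite -(eqn_modDr 1) !addn1; apply/eqP.
split => //.
have hb := bcong _ _ _ M0 (succ_cong _ _ _ h1').
move: h3; rewrite !QS => /eqP.
rewrite -modnDml -modnMm hb h2 modnMm modnDml eqn_modDl.
by move/eqP.
Qed.

Lemma backk M k a c : 0 < M -> eqst M (a + k) (c + k) -> eqst M a c.
Proof.
move=> M0; elim: k a c => [|k IH] a c; first by rewrite !addn0.
by rewrite !addnS => /(back _ _ _ M0) /IH.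
Qed.

Theorem propositionA6 (M : nat) : 0 < M ->
  exists p : nat, 0 < p /\ p <= 3 * M ^ 3 /\
    forall n : nat, Q (n + p) %% M = Q n %% M.
Proof.
move=> M0.
have M3 : 0 < 3 * M by rewrite muln_gt0 M0.
pose f (i : 'I_(3 * M ^ 3).+1) : 'I_(3*M) * 'I_M * 'I_M :=
  (Ordinal (ltn_pmod i (M3 : 0 < 3 * M)), Ordinal (ltn_pmod (Q i) M0),
   Ordinal (ltn_pmod (Q i.+1) M0)).
have : ~ injective f.
  move/leq_card; rewrite !card_prod !card_ord.
  by rewrite -!mulnA !expnS expn0 muln1 ltnn.
move=> ninj.
have [i [j [ij fij]]] : exists i j : 'I_(3 * M ^ 3).+1, i < j /\ f i = f j.
  have /injectivePn [x [y xy fxy]] : ~~ injectiveb f by apply/injectiveP.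
  case: (ltngtP x y) => hxy.
  - by exists x, y.
  - by exists y, x.
  - by move: xy; rewrite -val_eqE /= hxy eqxx.
have st : eqst M i j.
  have e1 := congr1 (fun x => val x.1.1) fij.
  have e2 := congr1 (fun x => val x.1.2) fij.
  have e3 := congr1 (fun x => val x.2) fij.
  by split.
exists (j - i); split; first by rewrite subn_gt0.
split.
  apply: leq_trans (leq_subr _ _) _; by rewrite -ltnS.
have st0 : eqst M 0 (j - i).
  apply: (backk M i 0 (j - i) M0); by rewrite add0n subnK // ltnW.
suff : forall n, eqst M n (n + (j - i)) by move=> h n; case: (h n) => _ ->.
elim=> [|n IH]; first by rewrite add0n.
by rewrite addSn; exact: fwd.
Qed.
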